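(* Let $\mathcal X\subset\mathbb{R}^d$ be a finite set of points in general position. Then there exists $\varepsilon_0>0$ such that for every $0<\varepsilon<\varepsilon_0$ and every $r>0$, the family $\{\mathrm{Vor}^\varepsilon_{\mathcal X}(x)\cap B_r(x)\}_{x\in\mathcal X}$ is a good cover of $\bigcup_{x\in\mathcal X}B_r(x)$, i.e. it covers this set and every non-empty finite intersection of its members is contractible.
   Context: General position: no three points collinear and no $d+2$ points on a common sphere. $\mathrm{Vor}_{\mathcal X}(x)=\{y\in\mathbb{R}^d:|y-x|\le|y-x'|\ \forall x'\in\mathcal X\}$, and its $\varepsilon$-offset is $\mathrm{Vor}^\varepsilon_{\mathcal X}(x)=\{p\in\mathbb{R}^d:\exists y\in\mathrm{Vor}_{\mathcal X}(x)\text{ with }|p-y|<\varepsilon\}$. $B_r(x)$ is the ball of radius $r$ centered at $x$. *)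

(* Defs.v *)
(* Points of R^d are row vectors 'rV[R]_d
   over an arbitrary R : realType (all realTypes are isomorphic to the reals). *)
From HB Require Import structures.
From mathcomp Require Import all_boot all_order all_algebra.
From mathcomp Require Import all_classical all_reals all_analysis.
Set Implicit Arguments.
Unset Strict Implicit.
Unset Printing Implicit Defensive.
Import Order.TTheory GRing.Theory Num.Theory.
Import numFieldNormedType.Exports.
Local Open Scope classical_set_scope.
Local Open Scope ring_scope.

Section Defs.
Variables (R : realType) (d : nat).
Local Notation V := 'rV[R]_d.

Definition enorm (v : V) : R := Num.sqrt (\sum_(i < d) (v ord0 i) ^+ 2).
Definition edist (x y : V) : R := enorm (x - y).

Definition ball_cl (x : V) (r : R) : set V := [set y | edist y x <= r].

Definition Vor (X : set V) (x : V) : set V :=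
  [set y | forall x', X x' -> edist y x <= edist y x'].

Definition Vor_off (X : set V) (eps : R) (x : V) : set V :=
  [set p | exists2 y, Vor X x y & edist p y < eps].

Definition collinear (a b c : V) : Prop :=
  exists l m : R, (l != 0 \/ m != 0) /\ l *: (b - a) + m *: (c - a) = 0.

Definition general_position (X : set V) : Prop :=
  (forall a b c, X a -> X b -> X c -> a <> b -> a <> c -> b <> c ->
     ~ collinear a b c) /\
  (forall f : 'I_(d.+2) -> V, injective f -> (forall i, X (f i)) ->
     ~ exists (c : V) (rho : R), forall i, edist (f i) c = rho).

Definition contractible (A : set V) : Prop :=
  exists2 p : V, A p &
  exists H : R * V -> V,
    {within [set z : R * V | 0 <= z.1 <= 1 /\ A z.2], continuous H} /\
    (forall t a, 0 <= t <= 1 -> A a -> A (H (t, a))) /\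
    (forall a, A a -> H (0, a) = a) /\
    (forall a, A a -> H (1, a) = p).

Definition good_cover (I : set V) (U : V -> set V) (Y : set V) : Prop :=
  \bigcup_(x in I) U x = Y /\
  (forall S : set V, S `<=` I -> finite_set S -> S !=set0 ->
     (\bigcap_(x in S) U x) !=set0 -> contractible (\bigcap_(x in S) U x)).

End Defs.

(* Main.v *)
Require Import Defs.
From HB Require Import structures.
From mathcomp Require Import all_boot all_order all_algebra.
From mathcomp Require Import all_classical all_reals all_analysis.
From mathcomp Require Import ring lra.
Import Order.TTheory GRing.Theory Num.Theory.
Import numFieldNormedType.Exports.
Local Open Scope classical_set_scope.
Local Open Scope ring_scope.

Set Implicit Arguments.
Unset Strict Implicit.
Local Notation edist := Defs.edist.
Local Notation enorm := Defs.enorm.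
Section Aux.
Variables (R : realType) (d : nat).
Local Notation V := 'rV[R]_d.

Definition sq (v : V) : R := \sum_(i < d) (v ord0 i) ^+ 2.

Lemma sq_ge0 v : 0 <= sq v.
Proof. by apply: sumr_ge0 => i _; rewrite exprn_even_ge0. Qed.

Lemma edist_le x y r : 0 <= r -> (edist y x <= r) = (sq (y - x) <= r ^+ 2).
Proof.
move=> r0; rewrite /edist /enorm -[X in _ <= X](ger0_norm r0) -sqrtr_sqr.
by rewrite ler_sqrt // exprn_even_ge0.
Qed.

Lemma edist_lt x y r : 0 < r -> (edist y x < r) = (sq (y - x) < r ^+ 2).
Proof.
move=> r0; rewrite /edist /enorm -[X in _ < X](gtr0_norm r0) -sqrtr_sqr.
by rewrite ltr_sqrt // exprn_gt0.
Qed.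

Lemma edist_le2 x y z : (edist y x <= edist y z) = (sq (y - x) <= sq (y - z)).
Proof. by rewrite /edist /enorm ler_sqrt // sq_ge0. Qed.

Lemma sum_aff (t : R) (F G H : 'I_d -> R) :
  (forall i, F i = t * G i + (1 - t) * H i) ->
  \sum_i F i = t * \sum_i G i + (1 - t) * \sum_i H i.
Proof.
move=> e; rewrite !mulr_sumr -big_split /=; exact: eq_bigr.
Qed.

Lemma sum_aff_le (t : R) (F G H : 'I_d -> R) :
  (forall i, F i <= t * G i + (1 - t) * H i) ->
  \sum_i F i <= t * \sum_i G i + (1 - t) * \sum_i H i.
Proof.
move=> e; rewrite !mulr_sumr -big_split /=; exact: ler_sum.
Qed.

Lemma sq_convex (t : R) (u w : V) : 0 <= t <= 1 ->
  sq (t *: u + (1 - t) *: w) <= t * sq u + (1 - t) * sq w.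
Proof.
move=> /andP[t0 t1]; apply: sum_aff_le => i; rewrite !mxE.
have h : 0 <= t * (1 - t) by apply: mulr_ge0; lra.
set a := u ord0 i; set b := w ord0 i.
have h2 : 0 <= t * (1 - t) * (a - b) ^+ 2 by apply: mulr_ge0 => //; exact: exprn_even_ge0.
suff -> : t * a ^+ 2 + (1 - t) * b ^+ 2 = (t * a + (1 - t) * b) ^+ 2 + t * (1 - t) * (a - b) ^+ 2.
  by rewrite lerDl.
ring.
Qed.

Definition convex_set (A : set V) :=
  forall t a b, 0 <= t <= 1 -> A a -> A b -> A (t *: a + (1 - t) *: b).

Lemma comb_sub (t : R) (a b c : V) :
  (t *: a + (1 - t) *: b) - c = t *: (a - c) + (1 - t) *: (b - c).
Proof. apply/rowP => i; rewrite !mxE; ring. Qed.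

Lemma ball_convex x r : 0 <= r -> convex_set (ball_cl x r).
Proof.
move=> r0 t a b ht; rewrite /ball_cl /= !edist_le // => ha hb.
rewrite comb_sub; have hc := @sq_convex t (a - x) (b - x) ht.
move: ht => /andP[t0 t1].
have : t * sq (a - x) <= t * r ^+ 2 by apply: ler_wpM2l.
have : (1 - t) * sq (b - x) <= (1 - t) * r ^+ 2 by apply: ler_wpM2l => //; lra.
lra.
Qed.

Lemma sq_comb (t : R) (a b z : V) : sq (t *: a + (1 - t) *: b - z) =
   t * sq (a - z) + (1 - t) * sq (b - z) - t * (1 - t) * sq (a - b).
Proof.
rewrite /sq !mulr_sumr -big_split -sumrB; apply: eq_bigr => i _; rewrite !mxE /=; ring.
Qed.

Lemma Vor_convex X x : convex_set (Vor X x).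
Proof.
move=> t a b ht ha hb x' Xx'; rewrite edist_le2 !sq_comb.
have := ha x' Xx'; have := hb x' Xx'; rewrite !edist_le2 => h1 h2.
move: ht => /andP[t0 t1].
have : t * sq (a - x) <= t * sq (a - x') by apply: ler_wpM2l.
have : (1 - t) * sq (b - x) <= (1 - t) * sq (b - x') by apply: ler_wpM2l => //; lra.
lra.
Qed.

Lemma Vor_off_convex X x eps : 0 < eps -> convex_set (Vor_off X eps x).
Proof.
move=> e0 t a b ht [ya hya da] [yb hyb db].
exists (t *: ya + (1 - t) *: yb); first exact: Vor_convex.
move: da db; rewrite !edist_lt // => da db.
have -> : t *: a + (1 - t) *: b - (t *: ya + (1 - t) *: yb) =
   t *: (a - ya) + (1 - t) *: (b - yb).
  by apply/rowP => i; rewrite !mxE; ring.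
have hc := @sq_convex t (a - ya) (b - yb) ht.
move: ht => /andP[t0 t1].
have : t * sq (a - ya) <= t * eps ^+ 2 by apply: ler_wpM2l => //; exact: ltW.
have : (1 - t) * sq (b - yb) <= (1 - t) * eps ^+ 2 by apply: ler_wpM2l; [lra| exact: ltW].
have : 0 < eps ^+ 2 by exact: exprn_gt0.
(* strictness: one of t, 1-t positive *)
case: (ltrP 0 t) => tp.
  have : t * sq (a - ya) < t * eps ^+ 2 by rewrite ltr_pM2l.
  lra.
have t00 : t = 0 by apply/eqP; rewrite eq_le tp t0.
move: t00 hc => -> hc _ _ _; rewrite subr0 mul0r add0r mul1r in hc *; exact: le_lt_trans hc db.
Qed.

Lemma seq_argmin (f : V -> R) (s : seq V) : s != [::] ->
  exists2 m, m \in s & forall y, y \in s -> f m <= f y.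
Proof.
elim: s => // a s IH _; case: (eqVneq s [::]) => [->|sn].
  by exists a; rewrite ?mem_seq1 // => y; rewrite mem_seq1 => /eqP ->.
have [m ms hm] := IH sn.
case: (leP (f a) (f m)) => h.
  exists a; first by rewrite mem_head.
  move=> y; rewrite in_cons => /orP[/eqP -> // | ys].
  exact: le_trans h (hm y ys).
exists m; first by rewrite in_cons ms orbT.
move=> y; rewrite in_cons => /orP[/eqP -> | ys]; [exact: ltW | exact: hm].
Qed.

Lemma edist_refl (p : V) : edist p p = 0.
Proof.
rewrite /edist /enorm subrr (eq_bigr (fun _ => 0)) ?big1 ?sqrtr0 // => i _.
by rewrite mxE expr0n.
Qed.

End Aux.

Theorem lemma3p8 (R : realType) (d : nat) (X : set 'rV[R]_d) :
  finite_set X -> general_position X ->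
  exists2 eps0 : R, 0 < eps0 &
    forall eps r : R, 0 < eps -> eps < eps0 -> 0 < r ->
      good_cover X (fun x => Vor_off X eps x `&` ball_cl x r)
                 (\bigcup_(x in X) ball_cl x r).
Proof.
move=> fX _; exists 1 => // eps r e0 _ r0; split.
  apply/seteqP; split.
    by move=> p [x Xx [_ hb]]; exists x.
  move=> p [x Xx hp].
  have xs : x \in (finmap.enum_fset (fset_set X)) by rewrite (in_fset_set fX) mem_set.
  have sn : (finmap.enum_fset (fset_set X)) != [::] by apply/eqP => e; rewrite e in xs.
  have [m ms hm] := seq_argmin (fun y => edist p y) sn.
  have Xm : X m by move: ms; rewrite (in_fset_set fX) in_setE.
  have hV : Vor X m p.
    move=> x' Xx'; apply: hm; by rewrite (in_fset_set fX) mem_set.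
  exists m => //; split.
    by exists p => //; rewrite edist_refl.
  have := hV x Xx; rewrite /ball_cl /=; move: hp; rewrite /ball_cl /=. move=> h1 h2; exact: le_trans h2 h1.
move=> S SX _ _ [p hp]; exists p => //.
have cv : forall x, S x -> convex_set (Vor_off X eps x `&` ball_cl x r).
  move=> x _ t a b ht [ha1 ha2] [hb1 hb2]; split.
    exact: Vor_off_convex.
  by apply: ball_convex => //; exact: ltW.
exists (fun z => (1 - z.1) *: z.2 + z.1 *: p); split; [|split; [|split]].
- apply: continuous_subspaceT => z.
  apply: cvgD; last by apply: cvgZ; [exact: cvg_fst | exact: cvg_cst].
  apply: cvgZ; last exact: cvg_snd.
  apply: cvgB; [exact: cvg_cst | exact: cvg_fst].
- move=> t a /andP[t0 t1] ha x Sx.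
  have e : 1 - (1 - t) = t by rewrite opprB addrC subrK.
  have := cv x Sx (1 - t) a p; rewrite e; apply; [|exact: ha|exact: hp].
  by apply/andP; split; rewrite ?gerBl // subr_ge0.
- by move=> a _ /=; rewrite subr0 scale1r scale0r addr0.
- by move=> a _ /=; rewrite subrr scale0r add0r scale1r.
Qed.
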